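(* For every integer $N\ge 1$, the number of tuples $(\mu_1,\dots,\mu_4;d_1,\dots,d_4)\in P^4\times\mathbb Z^4$ with $d_1+d_2+d_3+d_4$ odd and $$14\sum_{i=1}^4|\mu_i|+14\sum_{i=1}^4\binom{d_i}{2}+d_1+3d_2+5d_3+7d_4=N$$ equals the number of tuples $(\alpha_1,\dots,\alpha_4;e_1,\dots,e_4)\in P^4\times\mathbb Z^4$ with $e_1+e_2+e_3+e_4$ odd and $$14\sum_{i=1}^4|\alpha_i|+14\sum_{i=1}^4\binom{e_i}{2}+0e_1+2e_2+4e_3+6e_4+1=N.$$
   Context: $P$ denotes the set of all integer partitions into positive parts (including the empty partition); for a partition $\lambda$, $|\lambda|$ is the sum of its parts. For $d\in\mathbb Z$, $\binom{d}{2}=d(d-1)/2$. *)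

(* Defs.v *)
From HB Require Import structures.
From mathcomp Require Import all_boot all_order all_algebra.
Set Implicit Arguments. Unset Strict Implicit. Unset Printing Implicit Defensive.
Import Order.TTheory GRing.Theory Num.Theory.

(* An integer partition into positive parts, represented as a weakly
   decreasing list of positive naturals (the empty list is the empty
   partition).  Each partition has exactly one such representation. *)
Definition is_partition (s : seq nat) : bool :=
  sorted geq s && all (fun x => 0 < x)%N s.

Definition psize (s : seq nat) : nat := sumn s.

(* binom(d,2) = d(d-1)/2 for d : int (exact division) *)
Definition binz (d : int) : int := ((d * (d - 1)) %/ 2)%Z.

Definition tup := ((seq nat * seq nat * seq nat * seq nat) * (int * int * int * int))%type.

Definition has_card (T : eqType) (S : T -> Prop) (n : nat) : Prop :=
  exists s : seq T, [/\ uniq s, (forall x, x \in s <-> S x) & size s = n].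

Definition weight (c a1 a2 a3 a4 : int) (t : tup) : int :=
  let: ((m1, m2, m3, m4), (d1, d2, d3, d4)) := t in
  (14 * Posz (psize m1 + psize m2 + psize m3 + psize m4)%N
   + 14 * (binz d1 + binz d2 + binz d3 + binz d4)
   + (a1 * d1 + a2 * d2 + a3 * d3 + a4 * d4) + c)%R.

Definition admissible (c a1 a2 a3 a4 : int) (N : nat) (t : tup) : Prop :=
  let: ((m1, m2, m3, m4), (d1, d2, d3, d4)) := t in
  [/\ [&& is_partition m1, is_partition m2, is_partition m3 & is_partition m4],
      odd `|(d1 + d2 + d3 + d4)%R|%N
    & weight c a1 a2 a3 a4 t = Posz N].

Definition LHS_set (N : nat) : tup -> Prop := admissible 0 1 3 5 7 N.
Definition RHS_set (N : nat) : tup -> Prop := admissible 1 0 2 4 6 N.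

(* Main.v *)
Require Import Defs.
From HB Require Import structures.
From mathcomp Require Import all_boot all_order all_algebra zify.
Import Order.TTheory GRing.Theory Num.Theory.

Lemma binzE (d : int) : (2 * binz d = d * (d - 1))%R.
Proof.
rewrite /binz.
have [k hk] : exists k : int, (d * (d - 1) = k * 2)%R.
  case: (boolP (odd `|d|%N)) => h.
  - exists (((d - 1) %/ 2)%Z * d)%R.
    have e : (d - 1 = ((d - 1) %/ 2)%Z * 2)%R by lia.
    by rewrite {1}e mulrCA mulrA.
  - exists ((d %/ 2)%Z * (d - 1))%R.
    have e : (d = (d %/ 2)%Z * 2)%R by lia.
    by rewrite {1}e mulrAC.
rewrite hk mulzK //. lia.
Qed.

Definition hp (D : int) : int := ((D - 1) %/ 2)%Z.
Definition hq (E : int) : int := ((1 - E) %/ 2)%Z.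

Lemma hpE D k : D = (2 * k + 1)%R -> hp D = k.
Proof. rewrite /hp => ->. lia. Qed.
Lemma hqE E k : E = (1 - 2 * k)%R -> hq E = k.
Proof. rewrite /hq => ->. lia. Qed.

Lemma wLR (d1 d2 d3 d4 k : int) : (d1 + d2 + d3 + d4 = 2 * k + 1)%R ->
  (14 * (binz (d1 - k) + binz (d2 - k) + binz (d3 - k) + binz (d4 - k))
   + (0 * (d1 - k) + 2 * (d2 - k) + 4 * (d3 - k) + 6 * (d4 - k)) + 1
  = 14 * (binz d1 + binz d2 + binz d3 + binz d4)
   + (1 * d1 + 3 * d2 + 5 * d3 + 7 * d4) + 0)%R.
Proof.
move=> hD.
have h1 := binzE d1. have h2 := binzE d2. have h3 := binzE d3. have h4 := binzE d4.
have g1 := binzE (d1 - k). have g2 := binzE (d2 - k). have g3 := binzE (d3 - k). have g4 := binzE (d4 - k).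
have e4 : d4 = (2 * k + 1 - d1 - d2 - d3)%R by lia.
rewrite e4 in h4 g4 *.
lia.
Qed.

Lemma termge (d a : int) : (1 <= a <= 7)%R ->
  (d <= 14 * binz d + a * d)%R /\ (- d <= 14 * binz d + a * d)%R.
Proof.
move=> ha. have h := binzE d.
have [hd|hd] : (d <= 0 \/ 1 <= d)%R by lia.
- split; nia.
- split; nia.
Qed.

Fixpoint seqs (n m : nat) : seq (seq nat) :=
  match n with
  | 0 => [:: [::]]
  | n'.+1 => [::] :: [seq x :: s | x <- iota 0 m, s <- seqs n' m]
  end.

Lemma seqs_mem n m s : (size s <= n)%N -> all (fun x => x < m)%N s -> s \in seqs n m.
Proof.
elim: n s => [|n IH] [|x s] //=.
move=> hs /andP [hx ha]. rewrite in_cons; apply/orP; right.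
apply: (allpairs_f (fun x s => x :: s)); first by rewrite mem_iota.
exact: IH.
Qed.

Lemma part_bound s : is_partition s -> (size s <= sumn s)%N /\ all (fun x => x < (sumn s).+1)%N s.
Proof.
case/andP => _; elim: s => [|x s IH] //= /andP [hx ha].
have [h1 h2] := IH ha. split; first lia.
apply/andP; split; first lia.
apply/allP => y hy. have := allP h2 y hy. lia.
Qed.

Definition Zl (N : nat) : seq int := [seq (Posz i - Posz N)%R | i <- iota 0 (N + N).+1].

Lemma Zl_mem N (d : int) : (- Posz N <= d <= Posz N)%R -> d \in Zl N.
Proof.
move=> h. apply/mapP. exists `|(d + Posz N)%R|%N; last lia.
rewrite mem_iota. lia.
Qed.

Definition pl {A B : eqType} (s : seq A) (t : seq B) : seq (A * B) :=
  [seq (a, b) | a <- s, b <- t].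

Lemma pl_mem {A B : eqType} (s : seq A) (t : seq B) a b :
  a \in s -> b \in t -> (a, b) \in pl s t.
Proof. exact: (allpairs_f pair). Qed.

Definition big (N : nat) : seq tup :=
  let P := seqs N N.+1 in let Z := Zl N in
  pl (pl (pl (pl P P) P) P) (pl (pl (pl Z Z) Z) Z).

Definition admb (c a1 a2 a3 a4 : int) (N : nat) (t : tup) : bool :=
  let: ((m1, m2, m3, m4), (d1, d2, d3, d4)) := t in
  [&& [&& is_partition m1, is_partition m2, is_partition m3 & is_partition m4],
      odd `|(d1 + d2 + d3 + d4)%R|%N
    & weight c a1 a2 a3 a4 t == Posz N].

Lemma admbP c a1 a2 a3 a4 N t : reflect (admissible c a1 a2 a3 a4 N t) (admb c a1 a2 a3 a4 N t).
Proof.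
case: t => [[[[m1 m2] m3] m4] [[[d1 d2] d3] d4]] /=.
apply: (iffP and3P) => -[h1 h2 h3]; split => //; exact/eqP.
Qed.

Lemma P_mem N s : is_partition s -> (sumn s <= N)%N -> s \in seqs N N.+1.
Proof.
move=> hp hN. have [h1 h2] := part_bound _ hp.
apply: seqs_mem; first lia.
apply/allP => x hx. have := allP h2 x hx. lia.
Qed.

Lemma LHS_big N t : LHS_set N t -> t \in big N.
Proof.
case: t => [[[[m1 m2] m3] m4] [[[d1 d2] d3] d4]] /= [/and4P [p1 p2 p3 p4] hodd hw].
move: hw; rewrite /weight /psize => hw.
have [a1 b1] := termge d1 1 isT.
have [a2 b2] := termge d2 3 isT.
have [a3 b3] := termge d3 5 isT.
have [a4 b4] := termge d4 7 isT.
rewrite /big; repeat apply: pl_mem; try (apply: P_mem => //; lia);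
  apply: Zl_mem; lia.
Qed.

Definition fmap (t : tup) : tup :=
  let: (m, (d1, d2, d3, d4)) := t in
  let k := hp (d1 + d2 + d3 + d4)%R in (m, ((d1 - k)%R, (d2 - k)%R, (d3 - k)%R, (d4 - k)%R)).
Definition gmap (t : tup) : tup :=
  let: (m, (d1, d2, d3, d4)) := t in
  let k := hq (d1 + d2 + d3 + d4)%R in (m, ((d1 + k)%R, (d2 + k)%R, (d3 + k)%R, (d4 + k)%R)).

Lemma f_ok N t : LHS_set N t -> RHS_set N (fmap t) /\ gmap (fmap t) = t.
Proof.
case: t => [[[[m1 m2] m3] m4] [[[d1 d2] d3] d4]] /= [hpart hodd hw].
have [k hk] : exists k : int, (d1 + d2 + d3 + d4 = 2 * k + 1)%R.
  exists (((d1 + d2 + d3 + d4) - 1) %/ 2)%Z. lia.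
rewrite (hpE _ _ hk).
have hq' : hq (d1 - k + (d2 - k) + (d3 - k) + (d4 - k))%R = k by apply: hqE; lia.
rewrite hq'; split; last by rewrite !subrK.
split => //; first lia.
move: hw; rewrite /weight. have := wLR _ _ _ _ _ hk. lia.
Qed.

Lemma g_ok N t : RHS_set N t -> LHS_set N (gmap t) /\ fmap (gmap t) = t.
Proof.
case: t => [[[[m1 m2] m3] m4] [[[d1 d2] d3] d4]] /= [hpart hodd hw].
have [k hk] : exists k : int, (d1 + d2 + d3 + d4 = 1 - 2 * k)%R.
  exists ((1 - (d1 + d2 + d3 + d4)) %/ 2)%Z. lia.
rewrite (hqE _ _ hk).
have hk2 : (d1 + k + (d2 + k) + (d3 + k) + (d4 + k) = 2 * k + 1)%R by lia.
rewrite (hpE _ _ hk2); split; last by rewrite !addrK.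
split => //; first lia.
move: hw; rewrite /weight. have := wLR _ _ _ _ _ hk2. rewrite !addrK. lia.
Qed.

Theorem lemma3p1 (N : nat) : (1 <= N)%N ->
  exists n : nat, has_card (LHS_set N) n /\ has_card (RHS_set N) n.
Proof.
move=> _.
set L := undup (filter (admb 0 1 3 5 7 N) (big N)).
have hL : forall x, x \in L <-> LHS_set N x.
  move=> x; rewrite mem_undup mem_filter; split.
  - by case/andP => /admbP.
  - move=> h; apply/andP; split; [exact/admbP | exact: LHS_big].
exists (size L); split.
- exists L; split => //; exact: undup_uniq.
- exists (map fmap L); split; last by rewrite size_map.
  + rewrite map_inj_in_uniq; first exact: undup_uniq.
    move=> x y /hL hx /hL hy e.
    by rewrite -(f_ok _ _ hx).2 -(f_ok _ _ hy).2 e.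
  + move=> y; split.
    * by case/mapP => x /hL hx ->; exact: (f_ok _ _ hx).1.
    * move=> hy; have [h1 h2] := g_ok _ _ hy.
      rewrite -h2; apply: map_f; exact/hL.
Qed.
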